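(* Let $G$ be a Polish group, $X$ a Polish space with a continuous $G$-action, and $F\subseteq E^X_G$ a Borel equivalence relation on $X$ such that each $E^X_G$-class contains at most countably many $F$-classes. Then there is a Borel $G$-lg comeager set $C\subseteq X$ such that $G(x,C\cap[x]_F)$ is relatively open in $G(x,C)$ for every $x\in C$; equivalently, for every $x\in C$ there is an open neighbourhood $V\subseteq G$ of $1_G$ with $V\cdot x\cap C\subseteq[x]_F$.
   Context: $E^X_G=\{(x,y):\exists g\in G\ g\cdot x=y\}$; $[x]_F$ is the $F$-class of $x$. For $x\in X$, $A\subseteq X$, $G(x,A)=\{g\in G:g\cdot x\in A\}$. A set $C\subseteq X$ is $G$-lg comeager if $G\setminus G(x,C)$ is meager in $G$ for every $x\in X$. *)

(* Defs.v *)
From Stdlib Require Import Reals.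
Open Scope R_scope.

Definition topo (X : Type) := (X -> Prop) -> Prop.

Definition is_metric {X : Type} (d : X -> X -> R) : Prop :=
  (forall x y, 0 <= d x y) /\
  (forall x y, d x y = 0 <-> x = y) /\
  (forall x y, d x y = d y x) /\
  (forall x y z, d x z <= d x y + d y z).

Definition metric_open {X : Type} (d : X -> X -> R) (U : X -> Prop) : Prop :=
  forall x, U x -> exists eps, 0 < eps /\ forall y, d x y < eps -> U y.

Definition metric_cauchy {X : Type} (d : X -> X -> R) (u : nat -> X) : Prop :=
  forall eps, 0 < eps -> exists N, forall m n, (N <= m)%nat -> (N <= n)%nat ->
    d (u m) (u n) < eps.

Definition metric_converges {X : Type} (d : X -> X -> R) (u : nat -> X) (l : X) : Prop :=
  forall eps, 0 < eps -> exists N, forall n, (N <= n)%nat -> d (u n) l < eps.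

Definition metric_complete {X : Type} (d : X -> X -> R) : Prop :=
  forall u, metric_cauchy d u -> exists l, metric_converges d u l.

Definition metric_separable {X : Type} (d : X -> X -> R) : Prop :=
  exists s : nat -> X, forall x eps, 0 < eps -> exists n, d x (s n) < eps.

Definition polish {X : Type} (T : topo X) : Prop :=
  exists d : X -> X -> R, is_metric d /\ metric_complete d /\ metric_separable d /\
    forall U, T U <-> metric_open d U.

Definition prod_topo {A B : Type} (TA : topo A) (TB : topo B) : topo (A * B) :=
  fun W => forall p, W p -> exists U V, TA U /\ TB V /\ U (fst p) /\ V (snd p) /\
    forall a b, U a -> V b -> W (a, b).

Definition continuous {A B : Type} (TA : topo A) (TB : topo B) (f : A -> B) : Prop :=
  forall V, TB V -> TA (fun a => V (f a)).

Definition is_group {G : Type} (mul : G -> G -> G) (inv : G -> G) (e : G) : Prop :=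
  (forall a b c, mul a (mul b c) = mul (mul a b) c) /\
  (forall a, mul e a = a /\ mul a e = a) /\
  (forall a, mul (inv a) a = e /\ mul a (inv a) = e).

Definition polish_group {G : Type} (TG : topo G) (mul : G -> G -> G) (inv : G -> G) (e : G) : Prop :=
  is_group mul inv e /\ polish TG /\
  continuous (prod_topo TG TG) TG (fun p => mul (fst p) (snd p)) /\
  continuous TG TG inv.

Definition continuous_action {G X : Type} (TG : topo G) (TX : topo X)
    (mul : G -> G -> G) (e : G) (act : G -> X -> X) : Prop :=
  (forall x, act e x = x) /\
  (forall g h x, act (mul g h) x = act g (act h x)) /\
  continuous (prod_topo TG TX) TX (fun p => act (fst p) (snd p)).

Inductive borel {X : Type} (T : topo X) : (X -> Prop) -> Prop :=
  | borel_open U : T U -> borel T U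
  | borel_compl A : borel T A -> borel T (fun x => ~ A x)
  | borel_cunion (A : nat -> X -> Prop) :
      (forall n, borel T (A n)) -> borel T (fun x => exists n, A n x)
  | borel_ext A B : borel T A -> (forall x, A x <-> B x) -> borel T B.

Definition nowhere_dense {X : Type} (T : topo X) (N : X -> Prop) : Prop :=
  forall U, T U -> (exists x, U x) ->
    exists V, T V /\ (exists x, V x) /\ (forall x, V x -> U x) /\ (forall x, V x -> ~ N x).

Definition meager {X : Type} (T : topo X) (A : X -> Prop) : Prop :=
  exists N : nat -> X -> Prop, (forall n, nowhere_dense T (N n)) /\
    forall x, A x -> exists n, N n x.

Definition orbit_rel {G X : Type} (act : G -> X -> X) (x y : X) : Prop :=
  exists g, act g x = y.

Definition Gset {G X : Type} (act : G -> X -> X) (x : X) (A : X -> Prop) : G -> Prop :=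
  fun g => A (act g x).

Definition lg_comeager {G X : Type} (TG : topo G) (act : G -> X -> X) (C : X -> Prop) : Prop :=
  forall x, meager TG (fun g => ~ Gset act x C g).

Definition rel_open {Y : Type} (T : topo Y) (A B : Y -> Prop) : Prop :=
  exists U, T U /\ forall y, B y -> (A y <-> U y).

Definition equivalence {X : Type} (F : X -> X -> Prop) : Prop :=
  (forall x, F x x) /\ (forall x y, F x y -> F y x) /\
  (forall x y z, F x y -> F y z -> F x z).

(* Main.v *)
Require Import Defs.
From Stdlib Require Import Reals Lra Lia Classical ClassicalEpsilon Cantor.

Lemma cchoice {A : Type} (P : nat -> A -> Prop) :
  (forall n, exists a, P n a) -> exists f : nat -> A, forall n, P n (f n).
Proof.
  intro H. exists (fun n => proj1_sig (constructive_indefinite_description _ (H n))).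
  intro n. exact (proj2_sig (constructive_indefinite_description _ (H n))).
Qed.

Section Gen.
Variable (G : Type) (T : topo G).

Lemma nd_empty : nowhere_dense T (fun _ => False).
Proof. intros U HU [x Hx]. exists U. repeat split; eauto. Qed.

Lemma meager_sub (A B : G -> Prop) : meager T A -> (forall x, B x -> A x) -> meager T B.
Proof. intros [N [HN H]] Hs. exists N. split; auto. Qed.

Lemma meager_empty : meager T (fun _ => False).
Proof. exists (fun _ _ => False). split. intro; apply nd_empty. intros x []. Qed.

Lemma meager_nd (N : G -> Prop) : nowhere_dense T N -> meager T N.
Proof. intro H. exists (fun _ => N). split; auto. intros x Hx; exists 0%nat; auto. Qed.

Lemma meager_cunion (A : nat -> G -> Prop) : (forall n, meager T (A n)) ->
  meager T (fun x => exists n, A n x).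
Proof.
  intro H. destruct (cchoice (fun n N => (forall k, nowhere_dense T (N k)) /\
     forall x, A n x -> exists k, N k x) H) as [f Hf].
  exists (fun m => f (fst (of_nat m)) (snd (of_nat m))). split.
  - intro m. apply Hf.
  - intros x [n Hn]. destruct (proj2 (Hf n) x Hn) as [k Hk].
    exists (to_nat (n, k)). rewrite cancel_of_to. exact Hk.
Qed.

Lemma meager_union2 (A B : G -> Prop) : meager T A -> meager T B ->
  meager T (fun x => A x \/ B x).
Proof.
  intros HA HB. apply (meager_sub (fun x => exists n : nat, match n with O => A x | _ => B x end)).
  - apply meager_cunion. intros [|n]; auto.
  - intros x [H|H]; [exists 0%nat | exists 1%nat]; auto.
Qed.

Definition cmg (S W : G -> Prop) := meager T (fun g => W g /\ ~ S g).
Definition BP (S : G -> Prop) := exists O, T O /\ meager T (fun g => ~ (O g <-> S g)).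

Hypothesis T_inter : forall U V, T U -> T V -> T (fun g => U g /\ V g).
Hypothesis T_local : forall P : G -> Prop,
  (forall g, P g -> exists V, T V /\ V g /\ forall h, V h -> P h) -> T P.

Lemma BP_open U : T U -> BP U.
Proof. intro H. exists U. split; auto. apply (meager_sub _ _ meager_empty). tauto. Qed.

Lemma BP_compl S : BP S -> BP (fun g => ~ S g).
Proof.
  intros [O [HO HM]].
  set (O' := fun g => exists V, T V /\ V g /\ forall h, V h -> ~ O h).
  exists O'. split.
  - apply T_local. intros g [V [HV [Vg HVO]]]. exists V. repeat split; auto.
    intros h Vh. exists V. auto.
  - apply (meager_sub (fun g => ~ (O g <-> S g) \/ (~ O g /\ ~ O' g))).
    + apply meager_union2; auto. apply meager_nd.
      intros U HU [g Ug]. destruct (classic (exists h, U h /\ O h)) as [[h [Uh Oh]]|Hn].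
      * exists (fun x => U x /\ O x). split; [apply T_inter; auto|].
        split; [eauto|]. split; [intros x []; auto|]. intros x [_ Ox] [Hx _]; tauto.
      * exists U. repeat split; eauto. intros x Ux [_ H]. apply H.
        exists U. repeat split; auto. intros y Uy Oy. apply Hn; eauto.
    + intros g Hg. destruct (classic (O' g)) as [H1|H1].
      * left. assert (H2 := H1). destruct H2 as [V [_ [Vg HV]]]. specialize (HV g Vg). tauto.
      * destruct (classic (O g)); tauto.
Qed.

Lemma BP_cunion (S : nat -> G -> Prop) : (forall n, BP (S n)) -> BP (fun g => exists n, S n g).
Proof.
  intro H. destruct (cchoice (fun n O => T O /\ meager T (fun g => ~ (O g <-> S n g))) H)
    as [f Hf].
  exists (fun g => exists n, f n g). split.
  - apply T_local. intros g [n Hn]. exists (f n). repeat split; auto. apply Hf.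
    intros h Hh; eauto.
  - apply (meager_sub (fun g => exists n, ~ (f n g <-> S n g))).
    + apply meager_cunion. intro n; apply Hf.
    + intros g Hg. apply NNPP. intro Hn.
      apply Hg. split; intros [n Hn']; exists n; apply NNPP; intro Hc; apply Hn;
      exists n; tauto.
Qed.

Lemma borel_BP S : borel T S -> BP S.
Proof.
  induction 1.
  - apply BP_open; auto.
  - apply BP_compl; auto.
  - apply BP_cunion; auto.
  - destruct IHborel as [O [HO HM]]. exists O. split; auto.
    apply (meager_sub _ _ HM). intros g Hg. specialize (H0 g). tauto.
Qed.


Variable bas : nat -> G -> Prop.
Hypothesis bas_open : forall k, T (bas k).
Hypothesis bas_basis : forall U g, T U -> U g -> exists k, bas k g /\ forall h, bas k h -> U h.
Hypothesis baire : forall U, T U -> (exists g, U g) -> ~ meager T U.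

Definition cond k k' := (exists g, bas k' g) /\ forall g, bas k' g -> bas k g.

Lemma L (S W : G -> Prop) : BP S -> T W ->
  (meager T (fun g => W g /\ S g) <-> forall k', (exists g, bas k' g) ->
     (forall g, bas k' g -> W g) -> ~ cmg S (bas k')).
Proof.
  intros [O [HO HM]] HW. split.
  - intros HWS k' Hne Hsub Hc. apply (baire (bas k') (bas_open k') Hne).
    apply (meager_sub _ _ (meager_union2 _ _ Hc HWS)).
    intros g Hg. destruct (classic (S g)); [right|left]; auto.
  - intro H. apply (meager_sub _ _ HM). intros g [Wg Sg] Hiff.
    assert (Og : O g) by tauto.
    destruct (bas_basis (fun h => W h /\ O h) g (T_inter _ _ HW HO) (conj Wg Og)) as [k [Hk1 Hk2]].
    apply (H k); [eauto | intros h Hh; apply Hk2; auto |].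
    apply (meager_sub _ _ HM). intros h [Hh HnS] Hc. apply HnS. apply Hc. apply Hk2; auto.
Qed.

Lemma char_compl S k : BP S ->
  (cmg (fun g => ~ S g) (bas k) <-> forall k', cond k k' -> ~ cmg S (bas k')).
Proof.
  intro HS. unfold cmg at 1.
  assert (E : meager T (fun g => bas k g /\ ~ ~ S g) <-> meager T (fun g => bas k g /\ S g)).
  { split; intro H; apply (meager_sub _ _ H); intros g [H1 H2]; split; auto. now apply NNPP. }
  rewrite E, (L S (bas k) HS (bas_open k)). unfold cond. split.
  - intros H k' [H1 H2]; auto.
  - intros H k' H1 H2; apply H; split; auto.
Qed.

Lemma char_union (Sn : nat -> G -> Prop) k : (forall n, BP (Sn n)) ->
  (cmg (fun g => exists n, Sn n g) (bas k) <->
   forall k', cond k k' -> exists n k'', cond k' k'' /\ cmg (Sn n) (bas k'')).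
Proof.
  intro HB. assert (HU : BP (fun g => exists n, Sn n g)) by (apply BP_cunion; auto).
  split.
  - intros Hc k' [Hne Hsub]. apply NNPP; intro Hn.
    assert (Hm : forall n, meager T (fun g => bas k' g /\ Sn n g)).
    { intro n. apply (L (Sn n) (bas k') (HB n) (bas_open k')).
      intros k'' Hne' Hsub' Hc'. apply Hn. exists n, k''. repeat split; auto. }
    apply (baire (bas k') (bas_open k') Hne).
    apply (meager_sub _ _ (meager_union2 _ _ Hc (meager_cunion _ Hm))).
    intros g Hg. destruct (classic (exists n, Sn n g)) as [[n Hn']|Hn'].
    + right. exists n; auto.
    + left. auto.
  - intro H. unfold cmg.
    apply (L (fun g => ~ exists n, Sn n g) (bas k) (BP_compl _ HU) (bas_open k)).
    intros k' Hne Hsub Hc. destruct (H k' (conj Hne Hsub)) as [n [k'' [[Hne'' Hsub''] Hc'']]].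
    apply (baire (bas k'') (bas_open k'') Hne'').
    apply (meager_sub _ _ (meager_union2 _ _ Hc Hc'')).
    intros g Hg. destruct (classic (Sn n g)).
    + left. split; auto. intro Hx; apply Hx. eauto.
    + right; auto.
Qed.

Lemma char_open S k : T S ->
  (cmg S (bas k) <-> forall k', cond k k' -> exists g, bas k' g /\ S g).
Proof.
  intro HS. split.
  - intros Hc k' [Hne Hsub]. apply NNPP; intro Hn.
    apply (baire (bas k') (bas_open k') Hne). apply (meager_sub _ _ Hc).
    intros g Hg. split; auto. intro Sg. apply Hn; eauto.
  - intro H. apply meager_nd. intros U HU [g0 Ug0].
    destruct (classic (exists g, U g /\ bas k g)) as [[g [Ug Bg]]|Hn].
    + destruct (bas_basis _ g (T_inter _ _ HU (bas_open k)) (conj Ug Bg)) as [k' [H1 H2]].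
      destruct (H k') as [g' [Hg'1 Hg'2]].
      { split; eauto. intros h Hh; apply H2; auto. }
      exists (fun h => bas k' h /\ S h). split; [apply T_inter; auto|].
      split; eauto. split.
      * intros h [Hh _]. apply H2; auto.
      * intros h [_ Sh] [_ Hn]. auto.
    + exists U. split; auto. split; eauto. split; auto. intros h Uh [Bh _]. apply Hn; eauto.
Qed.

End Gen.
Open Scope R_scope.

Section Met.
Variable (X : Type) (T : topo X) (d : X -> X -> R).
Hypothesis Hd : is_metric d.
Hypothesis HT : forall U, T U <-> metric_open d U.

Lemma d_pos x y : 0 <= d x y. Proof. apply Hd. Qed.
Lemma d_refl x : d x x = 0. Proof. apply Hd. reflexivity. Qed.
Lemma d_sym x y : d x y = d y x. Proof. apply Hd. Qed.
Lemma d_tri x y z : d x z <= d x y + d y z. Proof. apply Hd. Qed.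

Lemma T_inter_m : forall U V, T U -> T V -> T (fun g => U g /\ V g).
Proof.
  intros U V HU HV. apply HT in HU, HV. apply HT. intros x [Ux Vx].
  destruct (HU x Ux) as [e1 [He1 H1]]. destruct (HV x Vx) as [e2 [He2 H2]].
  exists (Rmin e1 e2). split. apply Rmin_pos; auto.
  intros y Hy. split; [apply H1|apply H2]; eapply Rlt_le_trans; eauto;
  [apply Rmin_l|apply Rmin_r].
Qed.

Lemma T_local_m : forall P : X -> Prop,
  (forall g, P g -> exists V, T V /\ V g /\ forall h, V h -> P h) -> T P.
Proof.
  intros P H. apply HT. intros x Px. destruct (H x Px) as [V [HV [Vx HVP]]].
  apply HT in HV. destruct (HV x Vx) as [e [He H']]. exists e. split; auto.
Qed.

Lemma ball_open c r : T (fun y => d c y < r).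
Proof.
  apply HT. intros x Hx. exists (r - d c x). split. lra.
  intros y Hy. pose proof (d_tri c x y). lra.
Qed.

Variable s : nat -> X.
Hypothesis Hs : forall x eps, 0 < eps -> exists n, d x (s n) < eps.

Definition mbas (k : nat) : X -> Prop :=
  fun y => d (s (fst (of_nat k))) y < / INR (S (snd (of_nat k))).

Lemma mbas_open k : T (mbas k).
Proof. apply ball_open. Qed.

Lemma mbas_basis : forall U g, T U -> U g -> exists k, mbas k g /\ forall h, mbas k h -> U h.
Proof.
  intros U g HU Ug. apply HT in HU. destruct (HU g Ug) as [eps [He H]].
  destruct (archimed (2 / eps)) as [Hup _].
  assert (Hp : (0 < up (2/eps))%Z).
  { apply lt_IZR. assert (0 < 2/eps) by (apply Rdiv_lt_0_compat; lra). lra. }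
  set (m := Z.to_nat (up (2/eps))).
  assert (Hm : INR (S m) > 2 / eps).
  { rewrite S_INR. unfold m. rewrite INR_IZR_INZ, Znat.Z2Nat.id by lia. lra. }
  assert (Hpos : 0 < INR (S m)) by (apply lt_0_INR; lia).
  assert (Hr : / INR (S m) < eps / 2).
  { assert (H2 : 0 < 2 / eps) by (apply Rdiv_lt_0_compat; lra).
    replace (eps / 2) with (/ (2 / eps)) by (field; lra).
    apply Rinv_lt_contravar; [apply Rmult_lt_0_compat|]; lra. }
  assert (Hr0 : 0 < / INR (S m)) by (apply Rinv_0_lt_compat; auto).
  destruct (Hs g (/ INR (S m)) Hr0) as [n Hn].
  exists (to_nat (n, m)). unfold mbas. rewrite cancel_of_to. cbn [fst snd]. split.
  - rewrite d_sym; auto.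
  - intros h Hh. apply H. pose proof (d_tri g (s n) h). lra.
Qed.

Hypothesis Hc : metric_complete d.

Section BaireProof.
Variable N : nat -> X -> Prop.
Hypothesis HN : forall n, nowhere_dense T (N n).

Definition good n (p p' : X * R) :=
  0 < snd p' /\ snd p' <= snd p / 2 /\
  forall y, d (fst p') y <= snd p' -> d (fst p) y < snd p /\ ~ N n y.

Lemma step_ex n p : exists p', 0 < snd p -> good n p p'.
Proof.
  destruct p as [c r]. destruct (classic (0 < r)) as [Hr|Hr]; [|exists (c, r); simpl; tauto].
  destruct (HN n (fun y => d c y < r) (ball_open c r)) as [V [HV [[c' Vc'] [HVsub HVN]]]].
  { exists c. rewrite d_refl. auto. }
  apply HT in HV. destruct (HV c' Vc') as [eps [He Heps]].
  exists (c', Rmin (eps/2) (r/2)). intros _. unfold good; simpl. split; [|split].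
  - apply Rmin_pos; lra.
  - apply Rmin_r.
  - intros y Hy. assert (Vy : V y).
    { apply Heps. pose proof (Rmin_l (eps/2) (r/2)). lra. }
    split; auto.
Qed.

Definition st (n : nat) (p : X * R) : X * R :=
  proj1_sig (constructive_indefinite_description _ (step_ex n p)).
Lemma st_good n p : 0 < snd p -> good n p (st n p).
Proof. exact (proj2_sig (constructive_indefinite_description _ (step_ex n p))). Qed.

Variable p0 : X * R.
Hypothesis Hp0 : 0 < snd p0.

Fixpoint sq (k : nat) : X * R := match k with O => p0 | S k => st k (sq k) end.

Lemma sq_pos k : 0 < snd (sq k).
Proof. induction k; simpl; auto. apply (st_good k _ IHk). Qed.

Lemma sq_good k : good k (sq k) (sq (S k)).
Proof. apply st_good, sq_pos. Qed.

Lemma sq_rad k : snd (sq k) <= snd p0 * (/2) ^ k.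
Proof.
  induction k; simpl. lra. destruct (sq_good k) as [_ [H _]].
  simpl in H. lra.
Qed.

Lemma sq_nest k j y : d (fst (sq (k + j))) y < snd (sq (k + j)) -> d (fst (sq k)) y < snd (sq k).
Proof.
  revert y. induction j; intros y H.
  - rewrite Nat.add_0_r in H; auto.
  - apply IHj. rewrite Nat.add_succ_r in H. destruct (sq_good (k + j)) as [_ [_ H3]].
    apply H3. lra.
Qed.

Lemma sq_in k m : (k <= m)%nat -> d (fst (sq k)) (fst (sq m)) < snd (sq m) -> True.
Proof. auto. Qed.

Lemma sq_close k m : (k <= m)%nat -> d (fst (sq k)) (fst (sq m)) < snd (sq k).
Proof.
  intro H. replace m with (k + (m - k))%nat by lia. apply (sq_nest k (m - k)).
  rewrite d_refl. apply sq_pos.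
Qed.

Lemma sq_cauchy : metric_cauchy d (fun k => fst (sq k)).
Proof.
  intros eps He. destruct (pow_lt_1_zero (/2) ltac:(rewrite Rabs_pos_eq; lra) (eps / (2 * snd p0)))
    as [K HK].
  { apply Rdiv_lt_0_compat; lra. }
  exists K. intros m n Hm Hn.
  pose proof (sq_close K m Hm). pose proof (sq_close K n Hn).
  pose proof (d_tri (fst (sq m)) (fst (sq K)) (fst (sq n))).
  rewrite d_sym in H. pose proof (sq_rad K). specialize (HK K (le_n K)).
  rewrite Rabs_pos_eq in HK by (apply pow_le; lra).
  assert (snd p0 * (/2)^K < eps / 2).
  { apply (Rmult_lt_compat_l (snd p0)) in HK; auto. replace (snd p0 * (eps / (2 * snd p0))) with (eps/2) in HK by (field; lra). lra. }
  lra.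
Qed.

Lemma sq_limit l : metric_converges d (fun k => fst (sq k)) l ->
  forall k, d (fst (sq k)) l < snd (sq k) /\ ~ N k l.
Proof.
  intros Hl k. destruct (sq_good k) as [_ [_ H3]]. apply H3.
  apply Rnot_lt_le. intro Hlt.
  destruct (Hl (d (fst (sq (S k))) l - snd (sq (S k)))) as [M HM]. lra.
  specialize (HM (max M (S k)) (Nat.le_max_l _ _)).
  pose proof (sq_close (S k) (max M (S k)) (Nat.le_max_r _ _)).
  pose proof (d_tri (fst (sq (S k))) (fst (sq (max M (S k)))) l). lra.
Qed.
End BaireProof.

Lemma baire_m : forall U, T U -> (exists g, U g) -> ~ meager T U.
Proof.
  intros U HU [g Ug] [N [HN Hcov]].
  apply HT in HU. destruct (HU g Ug) as [r [Hr Hball]].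
  destruct (Hc _ (sq_cauchy N HN (g, r) Hr)) as [l Hl].
  pose proof (sq_limit N HN (g, r) Hr l Hl) as H.
  destruct (Hcov l) as [n Hn].
  - apply Hball. apply (H 0%nat).
  - apply (proj2 (H n)). auto.
Qed.

End Met.

Section Bor.
Variable (Y : Type) (T : topo Y).
Hypothesis T_full : T (fun _ => True).

Lemma borel_full : borel T (fun _ => True).
Proof. apply borel_open; auto. Qed.

Lemma borel_empty : borel T (fun _ => False).
Proof. apply (borel_ext _ (fun y => ~ True)). { apply borel_compl, borel_full. } tauto. Qed.

Lemma borel_imp_const (Q : Prop) (A : Y -> Prop) : borel T A -> borel T (fun y => Q -> A y).
Proof.
  intro H. destruct (classic Q) as [q|nq].
  - apply (borel_ext _ A); auto. intuition.
  - apply (borel_ext _ _ _ borel_full). intuition.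
Qed.

Lemma borel_and_const (Q : Prop) (A : Y -> Prop) : borel T A -> borel T (fun y => Q /\ A y).
Proof.
  intro H. destruct (classic Q) as [q|nq].
  - apply (borel_ext _ A); auto. intuition.
  - apply (borel_ext _ _ _ borel_empty). intuition.
Qed.

Lemma borel_inter_count (A : nat -> Y -> Prop) : (forall n, borel T (A n)) ->
  borel T (fun y => forall n, A n y).
Proof.
  intro H. apply (borel_ext _ (fun y => ~ exists n, ~ A n y)).
  - apply borel_compl, borel_cunion. intro n; apply borel_compl; auto.
  - intro y. split.
    + intros Hn n. apply NNPP. intro Ha. apply Hn; eauto.
    + intros Ha [n Hn]. auto.
Qed.
End Bor.

Lemma borel_preimage {A B : Type} (TA : topo A) (TB : topo B) (f : A -> B) :
  continuous TA TB f -> forall S, borel TB S -> borel TA (fun a => S (f a)).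
Proof.
  intros Hf S HS. induction HS.
  - apply borel_open. apply Hf; auto.
  - apply borel_compl; auto.
  - apply borel_cunion; auto.
  - apply (borel_ext _ _ _ IHHS). intro a; apply H.
Qed.

Lemma cont_section2 {A B : Type} (TA : topo A) (TB : topo B) (a : A) :
  (forall P : B -> Prop,
    (forall g, P g -> exists V, TB V /\ V g /\ forall h, V h -> P h) -> TB P) ->
  continuous TB (prod_topo TA TB) (fun b => (a, b)).
Proof.
  intros Hloc W HW. apply Hloc. intros b Hb. destruct (HW (a, b) Hb) as [U [V [HU [HV [Ua [Vb H]]]]]].
  exists V. split; [auto|split; [auto|]]. intros h Vh. apply H; auto.
Qed.

Lemma open_section2 {A B : Type} (TA : topo A) (TB : topo B) (a : A) :
  (forall P : B -> Prop,
    (forall g, P g -> exists V, TB V /\ V g /\ forall h, V h -> P h) -> TB P) ->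
  forall W, prod_topo TA TB W -> TB (fun b => W (a, b)).
Proof. intros Hloc W HW. apply (cont_section2 TA TB a Hloc W HW). Qed.

Section Q.
Variables (X G : Type) (TX : topo X) (TG : topo G).
Hypothesis TX_full : TX (fun _ => True).
Hypothesis TX_local : forall P : X -> Prop,
  (forall g, P g -> exists V, TX V /\ V g /\ forall h, V h -> P h) -> TX P.
Hypothesis TG_inter : forall U V, TG U -> TG V -> TG (fun g => U g /\ V g).
Hypothesis TG_local : forall P : G -> Prop,
  (forall g, P g -> exists V, TG V /\ V g /\ forall h, V h -> P h) -> TG P.
Variable bas : nat -> G -> Prop.
Hypothesis bas_open : forall k, TG (bas k).
Hypothesis bas_basis : forall U g, TG U -> U g -> exists k, bas k g /\ forall h, bas k h -> U h.
Hypothesis baire : forall U, TG U -> (exists g, U g) -> ~ meager TG U.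

Lemma sec_BP W x : borel (prod_topo TX TG) W -> BP G TG (fun g => W (x, g)).
Proof.
  intro H. apply (borel_BP G TG TG_inter TG_local).
  apply (borel_preimage TG (prod_topo TX TG) (fun g => (x, g))); auto.
  apply cont_section2; auto.
Qed.

Lemma mainQ W : borel (prod_topo TX TG) W ->
  forall k, borel TX (fun x => cmg G TG (fun g => W (x, g)) (bas k)).
Proof.
  intro HW. induction HW as [W HW|W HW IH|Wn HW IH|W W' HW IH Hext]; intro k.
  - apply (borel_ext _ (fun x => forall k', cond G bas k k' -> exists g, bas k' g /\ W (x, g))).
    + apply borel_inter_count; auto. intro k'. apply borel_imp_const; auto.
      apply borel_open. apply TX_local. intros x [g [Bg Wxg]].
      destruct (HW (x, g) Wxg) as [U [V [HU [HV [Ux [Vg H]]]]]].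
      exists U. split; auto. split; auto. intros a Ua. exists g. split; auto.
    + intro x. symmetry. apply (char_open G TG TG_inter bas bas_open bas_basis baire).
      apply (open_section2 TX TG); auto.
  - apply (borel_ext _ (fun x => forall k', cond G bas k k' -> ~ cmg G TG (fun g => W (x, g)) (bas k'))).
    + apply borel_inter_count; auto. intro k'. apply borel_imp_const; auto.
      apply borel_compl; auto.
    + intro x. symmetry.
      apply (char_compl G TG TG_inter bas bas_open bas_basis baire (fun g => W (x, g))).
      apply sec_BP; auto.
  - apply (borel_ext _ (fun x => forall k', cond G bas k k' ->
        exists n k'', cond G bas k' k'' /\ cmg G TG (fun g => Wn n (x, g)) (bas k''))).
    + apply borel_inter_count; auto. intro k'. apply borel_imp_const; auto.
      apply borel_cunion. intro n. apply borel_cunion. intro k''. apply borel_and_const; auto.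
    + intro x. symmetry.
      apply (char_union G TG TG_inter TG_local bas bas_open bas_basis baire
               (fun n g => Wn n (x, g))).
      intro n. apply sec_BP; auto.
  - apply (borel_ext _ _ _ (IH k)). intro x. unfold cmg. split; intro H;
    apply (meager_sub _ _ _ _ H); intros g [H1 H2]; split; auto; intro H3; apply H2; apply Hext; auto.
Qed.
End Q.

Lemma nd_preimage {G : Type} (T : topo G) (phi psi : G -> G) :
  continuous T T phi -> continuous T T psi -> (forall g, psi (phi g) = g) ->
  (forall y, phi (psi y) = y) -> forall N, nowhere_dense T N -> nowhere_dense T (fun g => N (phi g)).
Proof.
  intros Hphi Hpsi H1 H2 N HN U HU [g Ug].
  destruct (HN (fun y => U (psi y)) (Hpsi U HU)) as [V [HV [[y0 Vy0] [Hsub HVN]]]].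
  { exists (phi g). rewrite H1. auto. }
  exists (fun g => V (phi g)). split; [apply Hphi; auto|]. split.
  - exists (psi y0). rewrite H2. auto.
  - split.
    + intros h Vh. rewrite <- (H1 h). apply Hsub; auto.
    + intros h Vh. apply HVN; auto.
Qed.

Lemma meager_preimage {G : Type} (T : topo G) (phi psi : G -> G) :
  continuous T T phi -> continuous T T psi -> (forall g, psi (phi g) = g) ->
  (forall y, phi (psi y) = y) -> forall M, meager T M -> meager T (fun g => M (phi g)).
Proof.
  intros Hphi Hpsi H1 H2 M [N [HN Hc]]. exists (fun n g => N n (phi g)). split.
  - intro n. apply (nd_preimage T phi psi); auto.
  - intros g Hg. apply Hc; auto.
Qed.

Lemma cont_rmul {G : Type} (TG : topo G) (mul : G -> G -> G) (h : G) :
  (forall P : G -> Prop,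
    (forall g, P g -> exists V, TG V /\ V g /\ forall h, V h -> P h) -> TG P) ->
  continuous (prod_topo TG TG) TG (fun p => mul (fst p) (snd p)) ->
  continuous TG TG (fun g => mul g h).
Proof.
  intros Hloc Hm V HV. apply Hloc. intros g Hg.
  destruct (Hm V HV (g, h) Hg) as [U1 [U2 [HU1 [HU2 [U1g [U2h H]]]]]].
  exists U1. split; auto. split; auto. intros a Ua. apply (H a h); auto.
Qed.

Lemma cont_pairact {X G : Type} (TX : topo X) (TG : topo G) (act : G -> X -> X) :
  (forall U V, TX U -> TX V -> TX (fun g => U g /\ V g)) ->
  continuous (prod_topo TG TX) TX (fun p => act (fst p) (snd p)) ->
  continuous (prod_topo TX TG) (prod_topo TX TX) (fun p => (fst p, act (snd p) (fst p))).
Proof.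
  intros Hint Hc W HW [x g] Hxg. simpl in Hxg.
  destruct (HW _ Hxg) as [U1 [U2 [HU1 [HU2 [U1x [U2gx H]]]]]]. simpl in *.
  destruct (Hc U2 HU2 (g, x) U2gx) as [Ug [Ux [HUg [HUx [Ugg [Uxx H']]]]]]. simpl in *.
  exists (fun a => U1 a /\ Ux a), Ug. split; [apply Hint; auto|]. split; auto.
  split; [simpl; auto|]. split; [simpl; auto|].
  intros a b [Ha1 Ha2] Hb. simpl. apply H; auto.
Qed.

Lemma cont_orbitmap {X G : Type} (TX : topo X) (TG : topo G) (act : G -> X -> X) (c x : X) :
  (forall P : G -> Prop,
    (forall g, P g -> exists V, TG V /\ V g /\ forall h, V h -> P h) -> TG P) ->
  continuous (prod_topo TG TX) TX (fun p => act (fst p) (snd p)) ->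
  continuous TG (prod_topo TX TX) (fun g => (c, act g x)).
Proof.
  intros Hloc Hc W HW. apply Hloc. intros g Hg.
  destruct (HW _ Hg) as [U1 [U2 [HU1 [HU2 [U1x [U2gx H]]]]]]. simpl in *.
  destruct (Hc U2 HU2 (g, x) U2gx) as [Ug [Ux [HUg [HUx [Ugg [Uxx H']]]]]]. simpl in *.
  exists Ug. split; [exact HUg|]. split; [exact Ugg|]. intros b Hb. apply H; auto.
Qed.

Theorem mainTheorem8
  (G : Type) (TG : topo G) (mul : G -> G -> G) (inv : G -> G) (e : G)
  (HG : polish_group TG mul inv e)
  (X : Type) (TX : topo X) (HX : polish TX)
  (act : G -> X -> X) (Hact : continuous_action TG TX mul e act)
  (F : X -> X -> Prop)
  (HFeq : equivalence F)
  (HFbor : borel (prod_topo TX TX) (fun p => F (fst p) (snd p)))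
  (HFsub : forall x y, F x y -> orbit_rel act x y)
  (HFcount : forall x, exists f : nat -> X,
      forall y, orbit_rel act x y -> exists n, F y (f n)) :
  exists C : X -> Prop,
    borel TX C /\ lg_comeager TG act C /\
    forall x, C x ->
      rel_open TG (Gset act x (fun y => C y /\ F x y)) (Gset act x C).
Proof.
  destruct HG as [[Hassoc [Hid Hinv]] [[dG [HdG [HcG [[sG HsG] HTG]]]] [Hmul Hinvc]]].
  destruct HX as [dX [HdX [HcX [[sX HsX] HTX]]]].
  destruct Hact as [Hae [Hacomp Hacont]].
  destruct HFeq as [Frefl [Fsym Ftrans]].
  pose proof (T_inter_m G TG dG HTG) as TG_inter.
  pose proof (T_local_m G TG dG HTG) as TG_local.
  pose proof (T_inter_m X TX dX HTX) as TX_inter.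
  pose proof (T_local_m X TX dX HTX) as TX_local.
  assert (TX_full : TX (fun _ => True)).
  { apply HTX. intros x _. exists 1. split; [lra|auto]. }
  set (bas := mbas G dG sG).
  pose proof (mbas_open G TG dG HdG HTG sG) as bas_open.
  pose proof (mbas_basis G TG dG HdG HTG sG HsG) as bas_basis.
  pose proof (baire_m G TG dG HdG HTG HcG) as baire.
  fold bas in bas_open, bas_basis.
  assert (Hrt : forall h M, meager TG M -> meager TG (fun g => M (mul g h))).
  { intros h M HM. apply (meager_preimage TG (fun g => mul g h) (fun g => mul g (inv h))); auto.
    - apply cont_rmul; auto.
    - apply cont_rmul; auto.
    - intro g. rewrite <- Hassoc. rewrite (proj2 (Hinv h)). apply Hid.
    - intro g. rewrite <- Hassoc. rewrite (proj1 (Hinv h)). apply Hid. }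
  assert (Hcanc : forall g h x, act (mul h (inv g)) (act g x) = act h x).
  { intros g h x. rewrite <- Hacomp, <- Hassoc, (proj1 (Hinv g)), (proj2 (Hid h)). auto. }
  set (W := fun p : X * G => F (fst p) (act (snd p) (fst p))).
  assert (HW : borel (prod_topo TX TG) W).
  { exact (borel_preimage (prod_topo TX TG) (prod_topo TX TX)
      (fun p => (fst p, act (snd p) (fst p))) (cont_pairact TX TG act TX_inter Hacont) _ HFbor). }
  set (C0 := fun x => exists k, bas k e /\ cmg G TG (fun g => F x (act g x)) (bas k)).
  exists C0. split; [|split].
  - apply borel_cunion. intro k. apply borel_and_const; auto.
    exact (mainQ X G TX TG TX_full TX_local TG_inter TG_local bas bas_open bas_basis baire W HW k).
  - intro x. unfold Gset. destruct (HFcount x) as [f Hf].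
    set (P := fun n g => F (f n) (act g x)).
    set (UP := fun n g => exists k, bas k g /\ cmg G TG (P n) (bas k)).
    assert (HPm : forall n, meager TG (fun g => P n g /\ ~ UP n g)).
    { intro n. assert (HB : BP G TG (P n)).
      { apply (borel_BP G TG TG_inter TG_local).
        exact (borel_preimage TG (prod_topo TX TX) (fun g => (f n, act g x))
          (cont_orbitmap TX TG act (f n) x TG_local Hacont) _ HFbor). }
      destruct HB as [O [HO HM]]. apply (meager_sub _ _ _ _ HM).
      intros g [Pg Ug] Hiff. destruct (classic (O g)) as [Og|Og]; [|tauto].
      apply Ug. destruct (bas_basis O g HO Og) as [k [Hk1 Hk2]].
      exists k. split; auto. apply (meager_sub _ _ _ _ HM). intros h [Bh Ph] Hi.
      apply Ph. apply Hi. apply Hk2; auto. }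
    apply (meager_sub _ _ _ _ (meager_cunion _ _ _ HPm)).
    intros g HnC. destruct (Hf (act g x)) as [n Hn]. { exists g; auto. }
    exists n. split. { unfold P. apply Fsym; auto. }
    intros [k [Bk Hk]]. apply HnC.
    pose proof (Hrt g _ Hk) as Hk'. simpl in Hk'.
    destruct (bas_basis (fun h => bas k (mul h g)) e) as [k' [Hk'1 Hk'2]].
    { apply cont_rmul; auto. }
    { rewrite (proj1 (Hid g)). auto. }
    exists k'. split; auto. apply (meager_sub _ _ _ _ Hk'). intros h [Bh HnF].
    split; auto. intro Ph. apply HnF. unfold P in Ph. rewrite Hacomp in Ph. eauto.
  - intros x Cx. unfold rel_open, Gset.
    exists (fun g => exists k, bas k g /\ cmg G TG (fun h => F x (act h x)) (bas k)).
    split.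
    { apply TG_local. intros g [k [Bk Hk]]. exists (bas k). split; auto. split; auto.
      intros h Bh. eauto. }
    intros g Cg. split.
    + intros [_ Fxg]. destruct Cg as [k [Bk Hk]].
      pose proof (Hrt (inv g) _ Hk) as Hk'. simpl in Hk'.
      destruct (bas_basis (fun h => bas k (mul h (inv g))) g) as [k' [Hk'1 Hk'2]].
      { apply cont_rmul; auto. }
      { rewrite (proj2 (Hinv g)). auto. }
      exists k'. split; auto. apply (meager_sub _ _ _ _ Hk'). intros h [Bh HnF].
      split; auto. rewrite Hcanc. intro H. apply HnF. eauto.
    + intros [k1 [Bk1 Hk1]]. split; auto. destruct Cg as [k2 [Bk2 Hk2]].
      pose proof (Hrt (inv g) _ Hk2) as Hk2'. simpl in Hk2'.
      set (O := fun h => bas k1 h /\ bas k2 (mul h (inv g))).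
      assert (HO : TG O). { apply TG_inter; auto. apply cont_rmul; auto. }
      apply NNPP. intro HnF.
      apply (baire O HO). { exists g. split; auto. rewrite (proj2 (Hinv g)). auto. }
      apply (meager_sub _ _ _ _ (meager_union2 _ _ _ _ Hk1 Hk2')).
      intros h [Oh1 Oh2]. rewrite Hcanc.
      destruct (classic (F x (act h x))) as [H1|H1]; [right|left]; auto.
      split; auto. intro H2. apply HnF. eauto.
Qed.
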